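(* Let a gyrocircle in the Einstein gyrovector space $\mathbb{R}^n_s$ be given, and let $P$ be a point exterior to it (in its gyroplane). Suppose two gyrosecants of the gyrocircle drawn from $P$ meet the gyrocircle at the points $A_2,A_3$ and at the points $B_2,B_3$, respectively. Then $$\frac{\gamma_{|PA_2|}|PA_2|\,\gamma_{|PA_3|}|PA_3|}{\gamma_{|A_2A_3|}+1}=\frac{\gamma_{|PB_2|}|PB_2|\,\gamma_{|PB_3|}|PB_3|}{\gamma_{|B_2B_3|}+1},$$ where $|XY|=\|\ominus X\oplus Y\|$ denotes gyrodistance and $\gamma_a=(1-a^2/s^2)^{-1/2}$.
   Context: Fix $s>0$, $n\ge2$; $\mathbb{R}^n_s=\{v\in\mathbb{R}^n:\|v\|<s\}$ with Einstein addition $u\oplus v=\frac{1}{1+u\cdot v/s^2}\{u+\frac{1}{\gamma_u}v+\frac{1}{s^2}\frac{\gamma_u}{1+\gamma_u}(u\cdot v)u\}$, $\gamma_v=(1-\|v\|^2/s^2)^{-1/2}$, $\ominus v=-v$. Gyrolines are intersections of Euclidean lines with the ball. A gyroplane is $(A_1\oplus\mathrm{span}\{\ominus A_1\oplus A_2,\ominus A_1\oplus A_3\})\cap\mathbb{R}^n_s$ for $\ominus A_1\oplus A_2,\ominus A_1\oplus A_3$ linearly independent; a gyrocircle with gyrocenter $O$ and gyroradius $r>0$ is the set of points of a gyroplane containing $O$ at gyrodistance $r$ from $O$; its exterior consists of points of that gyroplane at gyrodistance $>r$ from $O$. A gyrosecant is a gyroline meeting the gyrocircle in two different points. *)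

(* Defs.v *)
From HB Require Import structures.
From mathcomp Require Import all_boot all_order all_algebra.
From mathcomp Require Import reals.
Set Implicit Arguments. Unset Strict Implicit. Unset Printing Implicit Defensive.
Import Order.TTheory GRing.Theory Num.Theory.
Local Open Scope ring_scope.

Section Einstein.
Variables (R : realType) (n : nat) (s : R).

Definition dotv (u v : 'rV[R]_n) : R := (u *m v^T) 0 0.
Definition normv (v : 'rV[R]_n) : R := Num.sqrt (dotv v v).

Definition in_ball (v : 'rV[R]_n) : Prop := normv v < s.

Definition gam (a : R) : R := (Num.sqrt (1 - a ^+ 2 / s ^+ 2))^-1.
Definition gamv (v : 'rV[R]_n) : R := gam (normv v).

Definition eadd (u v : 'rV[R]_n) : 'rV[R]_n :=
  (1 + dotv u v / s ^+ 2)^-1 *: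
    (u + (gamv u)^-1 *: v
       + (s ^+ 2)^-1 * (gamv u / (1 + gamv u)) * dotv u v *: u).

Definition eopp (v : 'rV[R]_n) : 'rV[R]_n := - v.

Definition gdist (X Y : 'rV[R]_n) : R := normv (eadd (eopp X) Y).

(* gyroline: intersection of the Euclidean line {a + t d} (d <> 0) with the ball *)
Definition gyroline (a d : 'rV[R]_n) : 'rV[R]_n -> Prop :=
  fun x => in_ball x /\ exists t : R, x = a + t *: d.

Definition gyroplane (A1 A2 A3 : 'rV[R]_n) : 'rV[R]_n -> Prop :=
  fun X => in_ball X /\
    exists a b : R,
      X = eadd A1 (a *: eadd (eopp A1) A2 + b *: eadd (eopp A1) A3).

Definition lin_indep2 (u v : 'rV[R]_n) : Prop :=
  forall a b : R, a *: u + b *: v = 0 -> a = 0 /\ b = 0.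

Definition is_gyroplane_data (A1 A2 A3 : 'rV[R]_n) : Prop :=
  [/\ in_ball A1, in_ball A2, in_ball A3 &
      lin_indep2 (eadd (eopp A1) A2) (eadd (eopp A1) A3)].

Definition gyrocircle (Pi : 'rV[R]_n -> Prop) (O : 'rV[R]_n) (r : R)
  : 'rV[R]_n -> Prop := fun X => Pi X /\ gdist O X = r.

Definition gyrocircle_ext (Pi : 'rV[R]_n -> Prop) (O : 'rV[R]_n) (r : R)
  : 'rV[R]_n -> Prop := fun X => Pi X /\ r < gdist O X.

End Einstein.

(* Main.v *)
Require Import Defs.
From HB Require Import structures.
From mathcomp Require Import all_boot all_order all_algebra.
From mathcomp Require Import reals.
From mathcomp Require Import ring lra.
Import Order.TTheory GRing.Theory Num.Theory.
Local Open Scope ring_scope.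
Set Implicit Arguments. Unset Strict Implicit.

Section Aux.
Variables (R : realType) (n : nat).
Implicit Types (u v w : 'rV[R]_n).

Lemma dotvE u v : dotv u v = \sum_j u 0 j * v 0 j.
Proof. by rewrite /dotv !mxE; apply: eq_bigr => j _; rewrite mxE. Qed.

Lemma dotvC u v : dotv u v = dotv v u.
Proof. rewrite !dotvE; apply: eq_bigr => j _; exact: mulrC. Qed.

Lemma dotvDl u v w : dotv (u + v) w = dotv u w + dotv v w.
Proof. by rewrite /dotv mulmxDl mxE. Qed.

Lemma dotvZl a u v : dotv (a *: u) v = a * dotv u v.
Proof. by rewrite /dotv -scalemxAl mxE. Qed.

Lemma dotvNl u v : dotv (- u) v = - dotv u v.
Proof. by rewrite -scaleN1r dotvZl mulN1r. Qed.

Lemma dotvDr u v w : dotv w (u + v) = dotv w u + dotv w v.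
Proof. by rewrite dotvC dotvDl !(dotvC w). Qed.

Lemma dotvZr a u v : dotv v (a *: u) = a * dotv v u.
Proof. by rewrite dotvC dotvZl dotvC. Qed.

Lemma dotvNr u v : dotv v (- u) = - dotv v u.
Proof. by rewrite dotvC dotvNl dotvC. Qed.

Lemma dotv_ge0 u : 0 <= dotv u u.
Proof. rewrite dotvE; apply: sumr_ge0 => j _; rewrite -expr2; exact: sqr_ge0. Qed.

Lemma normv2 u : normv u ^+ 2 = dotv u u.
Proof. by rewrite /normv sqr_sqrtr // dotv_ge0. Qed.

End Aux.

Section Gyro.
Variables (R : realType) (n : nat) (s : R).
Hypothesis hs : 0 < s.
Implicit Types (X Y Z : 'rV[R]_n).

Definition Bf X Y := 1 - dotv X Y / s ^+ 2.
Definition G X Y := gamv s X * gamv s Y * Bf X Y.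

Lemma ball_dot X : in_ball s X -> dotv X X < s ^+ 2.
Proof.
rewrite /in_ball -normv2 => h; have := sqrtr_ge0 (dotv X X).
rewrite -/(normv X) => h0; nra.
Qed.

Lemma Bf_gt0 X Y : in_ball s X -> in_ball s Y -> 0 < Bf X Y.
Proof.
move=> /ball_dot hX /ball_dot hY.
have h1 := dotv_ge0 (X + Y); have h2 := dotv_ge0 (X - Y).
rewrite !(dotvDl, dotvDr, dotvNl, dotvNr) (dotvC Y X) in h1 h2.
have -> : Bf X Y = (s ^+ 2 - dotv X Y) / s ^+ 2.
  by rewrite /Bf; field; rewrite gt_eqF.
rewrite divr_gt0 ?exprn_gt0 //; lra.
Qed.

Lemma BfC X Y : Bf X Y = Bf Y X.
Proof. by rewrite /Bf dotvC. Qed.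

Lemma gamvE X : gamv s X = (Num.sqrt (Bf X X))^-1.
Proof. by rewrite /gamv /gam normv2. Qed.

Lemma gamv_gt0 X : in_ball s X -> 0 < gamv s X.
Proof. by move=> h; rewrite gamvE invr_gt0 sqrtr_gt0 Bf_gt0. Qed.

Lemma gamv_sq X : in_ball s X -> gamv s X ^+ 2 * Bf X X = 1.
Proof.
move=> h; rewrite gamvE exprVn sqr_sqrtr ?mulVf //.
  by rewrite gt_eqF // Bf_gt0.
by rewrite ltW // Bf_gt0.
Qed.

Lemma G_gt0 X Y : in_ball s X -> in_ball s Y -> 0 < G X Y.
Proof.
by move=> hX hY; rewrite /G !mulr_gt0 ?gamv_gt0 ?Bf_gt0.
Qed.

Lemma gamvN X : gamv s (- X) = gamv s X.
Proof. by rewrite !gamvE /Bf dotvNl dotvNr opprK. Qed.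

Lemma key X Y : in_ball s X -> in_ball s Y ->
  let w := eadd s (eopp X) Y in dotv w w = s ^+ 2 * (1 - (G X Y) ^-2).
Proof.
move=> hX hY w.
rewrite /w /eadd /eopp gamvN.
rewrite !(dotvZl,dotvZr,dotvDl,dotvDr,dotvNl,dotvNr) (dotvC Y X).
have gx := gamv_sq hX; have gy := gamv_sq hY.
have gx0 := gamv_gt0 hX; have gy0 := gamv_gt0 hY.
have b0 := Bf_gt0 hX hY.
rewrite /G; move: gx gy b0; rewrite /Bf.
set g := gamv s X; set h := gamv s Y; set xx := dotv X X; set yy := dotv Y Y; set xy := dotv X Y.
move=> gx gy b0.
have hxx : xx = s^+2 - s^+2 / g^+2.
  have e : 1 - xx / s^+2 = (g^+2)^-1.
    apply: (@mulfI _ (g^+2)); first by rewrite expf_neq0 // gt_eqF.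
    by rewrite gx mulfV // expf_neq0 // gt_eqF.
  have -> : xx = s^+2 * (1 - (1 - xx / s^+2)) by field; rewrite gt_eqF.
  by rewrite e; field; rewrite gt_eqF.
have hyy : yy = s^+2 - s^+2 / h^+2.
  have e : 1 - yy / s^+2 = (h^+2)^-1.
    apply: (@mulfI _ (h^+2)); first by rewrite expf_neq0 // gt_eqF.
    by rewrite gy mulfV // expf_neq0 // gt_eqF.
  have -> : yy = s^+2 * (1 - (1 - yy / s^+2)) by field; rewrite gt_eqF.
  by rewrite e; field; rewrite gt_eqF.
rewrite hxx hyy.
have s0 : s != 0 by rewrite gt_eqF.
have g0 : g != 0 by rewrite gt_eqF.
have h0 : h != 0 by rewrite gt_eqF.
have g1 : 1 + g != 0 by rewrite gt_eqF // addr_gt0.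
have b1 : 1 - xy / s^+2 != 0 by rewrite gt_eqF.
field.
rewrite s0 g0 h0 g1 /= andbT.
have -> : s^+2 - xy = s^+2 * (1 - xy/s^+2) by field.
by rewrite mulf_neq0 // expf_neq0.
Qed.

Lemma gdist2 X Y : in_ball s X -> in_ball s Y ->
  gdist s X Y ^+ 2 = s ^+ 2 * (1 - (G X Y) ^-2).
Proof. by move=> hX hY; rewrite /gdist normv2 key. Qed.

Lemma gam_gdist X Y : in_ball s X -> in_ball s Y -> gam s (gdist s X Y) = G X Y.
Proof.
move=> hX hY; rewrite /gam gdist2 //.
have G0 := G_gt0 hX hY.
have -> : 1 - s ^+ 2 * (1 - G X Y ^- 2) / s ^+ 2 = (G X Y)^-1 ^+ 2.
  by rewrite exprVn; field; rewrite !gt_eqF.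
by rewrite sqrtr_sqr ger0_norm ?invrK // ltW // invr_gt0.
Qed.

Lemma G_sq1 X Y : in_ball s X -> in_ball s Y -> 0 <= G X Y ^+ 2 - 1.
Proof.
move=> hX hY; have G0 := G_gt0 hX hY.
have -> : G X Y ^+ 2 - 1 = G X Y ^+ 2 * (s ^+ 2 * (1 - (G X Y) ^-2)) / s ^+ 2.
  by field; rewrite !gt_eqF.
rewrite -gdist2 //; apply: divr_ge0; last exact: sqr_ge0.
by rewrite mulr_ge0 // sqr_ge0.
Qed.

Lemma G_ge1 X Y : in_ball s X -> in_ball s Y -> 1 <= G X Y.
Proof. move=> hX hY; have := G_gt0 hX hY; have := G_sq1 hX hY; nra. Qed.

Lemma gamd X Y : in_ball s X -> in_ball s Y ->
  gam s (gdist s X Y) * gdist s X Y = s * Num.sqrt (G X Y ^+ 2 - 1).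
Proof.
move=> hX hY; have G0 := G_gt0 hX hY.
rewrite gam_gdist // /gdist /normv key //.
have e : G X Y = Num.sqrt (G X Y ^+ 2) by rewrite sqrtr_sqr ger0_norm // ltW.
rewrite {1}e -sqrtrM ?sqr_ge0 //.
have -> : G X Y ^+ 2 * (s ^+ 2 * (1 - G X Y ^- 2)) = s ^+ 2 * (G X Y ^+ 2 - 1).
  by field; rewrite gt_eqF.
by rewrite sqrtrM ?sqr_ge0 // sqrtr_sqr ger0_norm // ltW.
Qed.
End Gyro.

Lemma abstract_id (R : realType) (a b d k : R) :
  1 <= d -> 0 < k -> a ^+ 2 + b ^+ 2 + 2 * a * b * d = 1 ->
  Num.sqrt ((a + b * d) ^+ 2 - 1) * Num.sqrt ((a * d + b) ^+ 2 - 1) / (d + 1)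
  = `|((a + b) * k) ^+ 2 - k ^+ 2| / (2 * k ^+ 2).
Proof.
move=> hd hk hc.
have -> : (a + b * d) ^+ 2 - 1 = b ^+ 2 * (d ^+ 2 - 1) + (a ^+ 2 + b ^+ 2 + 2 * a * b * d - 1)
  by ring.
have -> : (a * d + b) ^+ 2 - 1 = a ^+ 2 * (d ^+ 2 - 1) + (a ^+ 2 + b ^+ 2 + 2 * a * b * d - 1)
  by ring.
have -> : ((a + b) * k) ^+ 2 - k ^+ 2 = (k ^+ 2 * 2 * (d - 1)) * (- (a * b))
           + k ^+ 2 * (a ^+ 2 + b ^+ 2 + 2 * a * b * d - 1) by ring.
rewrite hc subrr !addr0 mulr0 addr0.
rewrite [Num.sqrt (b ^+ 2 * _)]sqrtrM ?sqr_ge0 // [Num.sqrt (a ^+ 2 * _)]sqrtrM ?sqr_ge0 // !sqrtr_sqr.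
have hp : 0 <= k ^+ 2 * 2 * (d - 1).
  apply: mulr_ge0; [apply: mulr_ge0; [exact: sqr_ge0|by []] | lra].
rewrite normrM normrN (ger0_norm hp) normrM.
have hS : Num.sqrt (d ^+ 2 - 1) ^+ 2 = d ^+ 2 - 1 by rewrite sqr_sqrtr //; nra.
have -> : `|b| * Num.sqrt (d ^+ 2 - 1) * (`|a| * Num.sqrt (d ^+ 2 - 1)) =
          `|a| * `|b| * (Num.sqrt (d ^+ 2 - 1) ^+ 2) by ring.
rewrite hS.
have d1 : d + 1 != 0 by rewrite gt_eqF //; lra.
have k0 : k != 0 by rewrite gt_eqF.
by field; rewrite k0 d1.
Qed.

Section Secant.
Variables (R : realType) (n : nat) (s : R).
Hypothesis hs : 0 < s.
Implicit Types (X Y : 'rV[R]_n).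

Lemma Bf_self X : in_ball s X -> Bf s X X = (gamv s X ^+ 2)^-1.
Proof.
move=> h; have g0 := gamv_gt0 hs h.
apply: (@mulfI _ (gamv s X ^+ 2)); first by rewrite expf_neq0 // gt_eqF.
by rewrite gamv_sq // mulfV // expf_neq0 // gt_eqF.
Qed.

Lemma secant (P u v O : 'rV[R]_n) (l k : R) :
  in_ball s P -> in_ball s u -> in_ball s v -> in_ball s O ->
  P = (1 - l) *: u + l *: v -> G s O u = k -> G s O v = k ->
  gam s (gdist s P u) * gdist s P u * (gam s (gdist s P v) * gdist s P v)
    / (gam s (gdist s u v) + 1)
  = s ^+ 2 * (`|G s O P ^+ 2 - k ^+ 2| / (2 * k ^+ 2)).
Proof.
move=> hP hu hv hO eP hku hkv.
rewrite !gamd // gam_gdist //.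
have k0 : 0 < k by rewrite -hku G_gt0.
have gP := gamv_gt0 hs hP; have gu := gamv_gt0 hs hu; have gv := gamv_gt0 hs hv.
have gO := gamv_gt0 hs hO.
have bl : forall Y, Bf s P Y = (1 - l) * Bf s u Y + l * Bf s v Y.
  by move=> Y; rewrite /Bf eP dotvDl !dotvZl; ring.
have bPP : Bf s P P = (1 - l) ^+ 2 * Bf s u u + 2 * l * (1 - l) * Bf s u v + l ^+ 2 * Bf s v v.
  rewrite bl [Bf s u P]BfC [Bf s v P]BfC !bl (BfC s v u); ring.
set a := (1 - l) * gamv s P / gamv s u.
set b := l * gamv s P / gamv s v.
set d := G s u v.
have ePu : G s P u = a + b * d.
  rewrite /G bl (Bf_self hu) /d /a /b /G (BfC s v u); field.
  by rewrite !gt_eqF.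
have ePv : G s P v = a * d + b.
  rewrite /G bl (Bf_self hv) /d /a /b /G; field.
  by rewrite !gt_eqF.
have eOP : G s O P = (a + b) * k.
  rewrite mulrDl -{1}hku -hkv /G (BfC s O P) bl (BfC s u O) (BfC s v O) /a /b; field.
  by rewrite !gt_eqF.
have hc : a ^+ 2 + b ^+ 2 + 2 * a * b * d = 1.
  rewrite -[RHS](gamv_sq hs hP) bPP (Bf_self hu) (Bf_self hv) /a /b /d /G; field.
  by rewrite !gt_eqF.
rewrite ePu ePv eOP -(abstract_id (d := d) _ k0 hc); last exact: G_ge1.
rewrite /d; ring.
Qed.
End Secant.

Lemma line_comb (R : realType) (n : nat) (a d P u v : 'rV[R]_n) (t0 t2 t3 : R) :
  P = a + t0 *: d -> u = a + t2 *: d -> v = a + t3 *: d -> u != v ->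
  exists l : R, P = (1 - l) *: u + l *: v.
Proof.
move=> eP eu ev huv.
have t23 : t3 - t2 != 0.
  apply/negP => /eqP h; move/negP: huv; apply; apply/eqP.
  by rewrite eu ev; have -> : t3 = t2 by apply/eqP; rewrite -subr_eq0 h.
exists ((t0 - t2) / (t3 - t2)).
rewrite eP eu ev !scalerDr !scalerA addrACA -scalerDl subrK scale1r -scalerDl.
congr (_ + _ *: _); field; exact: t23.
Qed.

Lemma secant2 (R : realType) (n : nat) (s : R) (hs : 0 < s) (O P u v a d : 'rV[R]_n) (r : R) :
  in_ball s O -> gyroline s a d P -> gyroline s a d u -> gyroline s a d v -> u != v ->
  gdist s O u = r -> gdist s O v = r ->
  gam s (gdist s P u) * gdist s P u * (gam s (gdist s P v) * gdist s P v)
    / (gam s (gdist s u v) + 1)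
  = s ^+ 2 * (`|G s O P ^+ 2 - gam s r ^+ 2| / (2 * gam s r ^+ 2)).
Proof.
move=> hO [hP [t0 eP]] [hu [t2 eu]] [hv [t3 ev]] huv hru hrv.
have [l el] := line_comb eP eu ev huv.
apply: (secant hs hP hu hv hO el).
  by rewrite -hru gam_gdist.
by rewrite -hrv gam_gdist.
Qed.

Unset Implicit Arguments.

Theorem mainTheorem5 (R : realType) (n : nat) (s : R)
  (hn : (2 <= n)%N) (hs : 0 < s)
                     
  (C1 C2 C3 : 'rV[R]_n) (hPi : is_gyroplane_data s C1 C2 C3)
                                                                       
  (O : 'rV[R]_n) (r : R) (hO : gyroplane s C1 C2 C3 O) (hr : 0 < r)
                                    
  (P : 'rV[R]_n) (hP : gyrocircle_ext s (gyroplane s C1 C2 C3) O r P)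
                                                                      
  (a1 d1 : 'rV[R]_n) (hd1 : d1 != 0)
  (A2 A3 : 'rV[R]_n)
  (hPL1 : gyroline s a1 d1 P)
  (hA2L : gyroline s a1 d1 A2) (hA3L : gyroline s a1 d1 A3)
  (hA2 : gyrocircle s (gyroplane s C1 C2 C3) O r A2)
  (hA3 : gyrocircle s (gyroplane s C1 C2 C3) O r A3)
  (hA23 : A2 != A3)
                                                                       
  (a2 d2 : 'rV[R]_n) (hd2 : d2 != 0)
  (B2 B3 : 'rV[R]_n)
  (hPL2 : gyroline s a2 d2 P)
  (hB2L : gyroline s a2 d2 B2) (hB3L : gyroline s a2 d2 B3)
  (hB2 : gyrocircle s (gyroplane s C1 C2 C3) O r B2)
  (hB3 : gyrocircle s (gyroplane s C1 C2 C3) O r B3)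
  (hB23 : B2 != B3) :
  gam s (gdist s P A2) * gdist s P A2 * (gam s (gdist s P A3) * gdist s P A3)
    / (gam s (gdist s A2 A3) + 1)
  = gam s (gdist s P B2) * gdist s P B2 * (gam s (gdist s P B3) * gdist s P B3)
    / (gam s (gdist s B2 B3) + 1).
Proof.
have hOb : in_ball s O by case: hO.
rewrite (secant2 hs hOb hPL1 hA2L hA3L hA23 hA2.2 hA3.2).
by rewrite (secant2 hs hOb hPL2 hB2L hB3L hB23 hB2.2 hB3.2).
Qed.
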